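(* Let $d\ge 1$, let $1<s<2^d$ with $s=j\cdot 2^k$, $j$ odd, $k\ge 0$. For $t\ge 0$ set $\lambda_t=\lambda^*(d+t,2^t s)$ and $c_t=\frac12-\frac{2^{d-k}-1}{2^{d+t+1}-1}$. Then for every $t\ge 0$, $\lambda_t\le \frac12+c_t\lambda_{t+1}$. More precisely, for every $n\ge d+t+1$ and every $A\subseteq\mathbb{F}_2^n$, \[\lambda^*(n,d+t,2^t s,A)\le \frac12+c_t\,\lambda^*(n,d+t+1,2^{t+1}s,A).\]
   Context: For integers $n\ge d\ge 1$, a $d$-flat in $\mathbb{F}_2^n$ is a set $x_0+U$ with $x_0\in\mathbb{F}_2^n$ and $U$ a $d$-dimensional linear subspace of $\mathbb{F}_2^n$. For $A\subseteq\mathbb{F}_2^n$ and an integer $0\le s\le 2^d$, $\lambda^*(n,d,s,A)$ denotes the fraction of $d$-flats $Q$ in $\mathbb{F}_2^n$ with $|Q\cap A|=s$. Let $\lambda^*(n,d,s)=\max_{A}\lambda^*(n,d,s,A)$ and $\lambda^*(d,s)=\lim_{n\to\infty}\lambda^*(n,d,s)$. *)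

(* Defs.v *)
From HB Require Import structures.
From mathcomp Require Import all_boot all_order all_algebra.
Set Implicit Arguments. Unset Strict Implicit. Unset Printing Implicit Defensive.
Import Order.TTheory GRing.Theory Num.Theory.

Notation vec n := 'rV['F_2]_n.

Definition flat_of n (x0 : vec n) (U : 'M['F_2]_n) : {set vec n} :=
  [set x : vec n | ((x - x0)%R <= U)%MS].

Definition flats (n d : nat) : {set {set vec n}} :=
  [set Q : {set vec n} | [exists x0 : vec n, exists U : 'M['F_2]_n,
      (\rank U == d) && (Q == flat_of x0 U)]].

Definition lam (n d s : nat) (A : {set vec n}) : rat :=
  (#|[set Q in flats n d | #|Q :&: A| == s]|%:R / #|flats n d|%:R)%R.
Arguments lam n d s A : clear implicits.

(* Main.v *)
Require Import Defs.
From HB Require Import structures.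
From mathcomp Require Import all_boot all_order all_algebra.
From mathcomp Require Import zify ring.
Import Order.TTheory GRing.Theory Num.Theory.
Set Implicit Arguments. Unset Strict Implicit. Unset Printing Implicit Defensive.
Local Open Scope ring_scope.
Lemma F2_cases (c : 'F_2) : c = 0 \/ c = 1.
Proof. by case: c => [[|[|//]]] ?; [left|right]; apply/val_inj. Qed.

Lemma F2_add11 : (1 + 1 : 'F_2) = 0.
Proof. by apply/val_inj. Qed.

Lemma card_F2 : #|'F_2| = 2%N.
Proof. by rewrite card_Fp. Qed.

Lemma card_rV2 m : #|{: 'rV['F_2]_m}| = (2 ^ m)%N.
Proof. by rewrite card_mx card_F2 mul1n. Qed.

Lemma card_rowspace m p (L : 'M['F_2]_(p, m)) :
  #|[set x : 'rV['F_2]_m | (x <= L)%MS]| = (2 ^ \rank L)%N.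
Proof.
have -> : [set x : 'rV['F_2]_m | (x <= L)%MS] =
   [set y *m row_base L | y in [set: 'rV['F_2]_(\rank L)]].
  apply/setP => x; rewrite inE; apply/idP/imsetP.
    rewrite -(eq_row_base L) => /submxP [y ->]. by exists y; rewrite ?inE.
  move=> [y _ ->]; rewrite -(eq_row_base L); exact: submxMl.
rewrite card_imset; last exact: row_free_inj (row_base_free L).
by rewrite cardsT card_rV2.
Qed.

Definition dot m (y f : 'rV['F_2]_m) : 'F_2 := (y *m f^T) 0 0.

Lemma dotDr m (y f g : 'rV['F_2]_m) : dot y (f + g) = dot y f + dot y g.
Proof. by rewrite /dot linearD /= mulmxDr mxE. Qed.

Lemma dot0r m (y : 'rV['F_2]_m) : dot y 0 = 0.
Proof. by rewrite /dot trmx0 mulmx0 mxE. Qed.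

Lemma card_sub_sum (T : finType) (B : {set T}) (P : pred T) :
  #|[set y in B | P y]| = (\sum_(y in B) (P y : nat))%N.
Proof.
rewrite -sum1_card (eq_bigl (fun y => (y \in B) && P y)); last by move=> y; rewrite inE.
rewrite big_mkcondr /=; apply: eq_bigr => y _; by case: (P y).
Qed.

Lemma half_count m (W : 'M['F_2]_m) (y f0 : 'rV['F_2]_m) :
  (f0 <= W)%MS -> dot y f0 = 1 ->
  (2 * #|[set f : 'rV_m | (f <= W)%MS & dot y f == 1%R]|)%N =
  #|[set f : 'rV_m | (f <= W)%MS]|.
Proof.
move=> f0W d1.
set S := [set f : 'rV_m | (f <= W)%MS].
set S1 := [set f : 'rV_m | (f <= W)%MS & dot y f == 1%R].
set S0 := [set f : 'rV_m | (f <= W)%MS & dot y f == 0%R].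
have tinj : injective (fun f : 'rV['F_2]_m => f + f0) by apply: addIr.
have h10 : (#|S1| <= #|S0|)%N.
  rewrite -(card_imset S1 tinj); apply: subset_leq_card; apply/subsetP => g.
  case/imsetP => f; rewrite !inE => /andP [fW /eqP df] ->.
  by rewrite addmx_sub // dotDr df d1 F2_add11.
have h01 : (#|S0| <= #|S1|)%N.
  rewrite -(card_imset S0 tinj); apply: subset_leq_card; apply/subsetP => g.
  case/imsetP => f; rewrite !inE => /andP [fW /eqP df] ->.
  by rewrite addmx_sub // dotDr df d1 add0r.
have -> : #|S| = (#|S1| + #|S0|)%N.
  rewrite -(cardsID [set f | dot y f == 1%R] S); congr (_ + _)%N; apply: eq_card => f;
  rewrite !inE; case: (F2_cases (dot y f)) => ->; by rewrite ?andbT ?andbF.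
have /eqP : (#|S1| == #|S0|)%N by rewrite eqn_leq h10 h01.
by move=> ->; rewrite mul2n addnn.
Qed.

Lemma card_sub_sum2 (T : finType) (P Q : pred T) :
  #|[set y | P y & Q y]| = (\sum_(y | P y) (Q y : nat))%N.
Proof.
rewrite -sum1_card (eq_bigl (fun y => P y && Q y)); last by move=> y; rewrite inE.
rewrite big_mkcondr /=; apply: eq_bigr => y _; by case: (Q y).
Qed.

Definition cnt1 m (B : {set 'rV['F_2]_m}) (f : 'rV['F_2]_m) :=
  #|[set y in B | dot y f == 1%R]|.

Lemma poisson m (B : {set 'rV['F_2]_m}) (W : 'M['F_2]_m) :
  (forall f, (f <= W)%MS -> f != 0 -> (2 * cnt1 B f)%N = #|B|) ->
  exists N, ((2 ^ \rank W).-1 * #|B| = 2 ^ \rank W * N)%N.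
Proof.
move=> H.
rewrite -card_rowspace.
set WS := [set f : 'rV_m | (f <= W)%MS].
have E : (\sum_(f | (f <= W)%MS) cnt1 B f =
          \sum_(y in B) #|[set f : 'rV_m | (f <= W)%MS & dot y f == 1%R]|)%N.
  rewrite /cnt1; under eq_bigr do rewrite card_sub_sum.
  rewrite exchange_big /=; apply: eq_bigr => y _; by rewrite card_sub_sum2.
have L1 : (2 * \sum_(f | (f <= W)%MS) cnt1 B f = (#|WS|).-1 * #|B|)%N.
  rewrite big_distrr /= (bigD1 0) ?sub0mx //=.
  have -> : cnt1 B 0 = 0%N.
    rewrite /cnt1; apply: eq_card0 => y.
    by rewrite !inE dot0r andbF.
  rewrite muln0 add0n (eq_bigr (fun _ => #|B|)); last first.
    by move=> f /andP [fW fn0]; exact: H.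
  rewrite sum_nat_const; congr (_ * _)%N.
  rewrite (cardD1 0 WS) inE sub0mx /=.
  by apply: eq_card => f; rewrite !inE andbC.
exists (\sum_(y in B) ([exists f0, (f0 <= W)%MS && (dot y f0 == 1%R)] : nat))%N.
rewrite -L1 E big_distrr big_distrr /=; apply: eq_bigr => y _.
case: existsP => [[f0 /andP [f0W /eqP d1]]|nex].
  by rewrite muln1 (half_count f0W d1).
rewrite muln0 (_ : #|_| = 0%N) ?muln0 //; apply: eq_card0 => f; rewrite !inE.
apply/negP => /andP [fW d1].
by apply: nex; exists f; rewrite fW.
Qed.

Lemma addxx m (v : 'rV['F_2]_m) : v + v = 0.
Proof.
apply/rowP => i; rewrite !mxE; case: (F2_cases (v 0 i)) => ->; first by rewrite addr0.
exact: F2_add11.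
Qed.

Lemma rank_add_vec m (L : 'M['F_2]_m) (v : 'rV['F_2]_m) :
  ~~ (v <= L)%MS -> \rank (L + v)%MS = (\rank L).+1.
Proof.
move=> nvL.
have v0 : v != 0 by apply: contra nvL => /eqP ->; rewrite sub0mx.
have rv : \rank v = 1%N.
  by apply/eqP; rewrite eqn_leq rank_leq_row lt0n mxrank_eq0 v0.
have rc : \rank (L :&: v)%MS = 0%N.
  have := mxrank_leqif_sup (capmxSr L v); rewrite rv => le.
  have : (\rank (L :&: v)%MS < 1)%N.
    rewrite (ltn_leqif le); apply: contra nvL => h.
    exact: submx_trans h (capmxSl _ _).
  by case: (\rank _).
have := mxrank_sum_cap L v; rewrite rc rv addn0 addn1 //.
Qed.

Lemma sub_add_vec m (L : 'M['F_2]_m) (v x : 'rV['F_2]_m) :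
  (x <= L + v)%MS -> exists2 u, (u <= L)%MS & (x = u \/ x = u + v).
Proof.
case/sub_addsmxP => [[u1 u2]] /= ->.
exists (u1 *m L); first exact: submxMl.
rewrite [u2]mx11_scalar mul_scalar_mx.
by case: (F2_cases (u2 0 0)) => ->; [left; rewrite scale0r addr0 | right; rewrite scale1r].
Qed.

Lemma block m (a : nat) : forall (l : nat) (L : 'M['F_2]_m) (X : {set 'rV['F_2]_m}),
  \rank L = l -> (l + a + 1 <= m)%N ->
  (forall x, x \in X -> ~~ (x <= L)%MS) ->
  (forall x u, x \in X -> (u <= L)%MS -> x + u \in X) ->
  (forall W : 'M['F_2]_m, (L <= W)%MS -> \rank W = (l + a + 1)%N ->
      exists2 x, x \in X & (x <= W)%MS) ->
  (2 ^ l * (2 ^ (m - l - a) - 1) <= #|X|)%N.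
Proof.
have full : forall l (L : 'M['F_2]_m) (X : {set 'rV['F_2]_m}), \rank L = l ->
  (forall x, ~~ (x <= L)%MS -> x \in X) -> (2 ^ m - 2 ^ l <= #|X|)%N.
  move=> l L X rL H.
  have := cardsC [set x : 'rV['F_2]_m | (x <= L)%MS].
  rewrite card_rV2 card_rowspace rL => e.
  rewrite -e addKn; apply: subset_leq_card; apply/subsetP => x.
  by rewrite !inE => /H.
have arith : forall l e, (l + e <= m)%N -> (2 ^ l * (2 ^ e - 1) <= 2 ^ m - 2 ^ l)%N.
  move=> l e le; rewrite mulnBr muln1 -expnD leq_sub2r // leq_exp2l //.
elim: a => [|a IH] l L X rL lm Hn Hinv Hb.
  apply: leq_trans (full l L X rL _); first by apply: arith; lia.
  move=> x nxL.
  have rW : \rank (L + x)%MS = (l + 0 + 1)%N by rewrite rank_add_vec // rL addn0 addn1.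
  have [x' x'X x'W] := Hb (L + x)%MS (addsmxSl _ _) rW.
  have [u uL [exu|exu]] := sub_add_vec x'W.
    by move: (Hn _ x'X); rewrite exu uL.
  have -> : x = x' + - u by rewrite exu addrC addKr.
  by apply: Hinv; rewrite // eqmx_opp.
case: (boolP [exists v, ~~ (v <= L)%MS && (v \notin X)]) => [/existsP [v /andP [nvL nvX]]|nex]; last first.
  apply: leq_trans (full l L X rL _); first by apply: arith; lia.
  move=> x nxL; apply: contraR nex => nxX; apply/existsP; exists x; by rewrite nxL nxX.
pose L' := (L + v)%MS.
pose X' := [set x | (x \in X) || (x + v \in X)].
have rL' : \rank L' = l.+1 by rewrite rank_add_vec // rL.
have LL' : (L <= L')%MS by apply: addsmxSl.
have vX : forall u, (u <= L)%MS -> u + v \in X -> False.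
  move=> u uL uvX; move: nvX; have -> : v = (u + v) + - u by rewrite addrC addKr.
  by rewrite Hinv // eqmx_opp.
have IH' := IH l.+1 L' X' rL' (ltac:(lia)).
have := IH' _ _ _.
have H1 : forall x, x \in X' -> ~~ (x <= L')%MS.
  move=> x; rewrite inE => /orP [xX|xvX]; apply/negP => /sub_add_vec [u uL [ex|ex]].
  - by move: (Hn _ xX); rewrite ex uL.
  - by apply: (vX u uL); rewrite -ex.
  - by apply: (vX u uL); rewrite -ex.
  - by move: (Hn _ xvX); rewrite ex -addrA addxx addr0 uL.
have H2 : forall x u, x \in X' -> (u <= L')%MS -> x + u \in X'.
  move=> x u'; rewrite !inE => /orP [xX|xvX] /sub_add_vec [u uL [->|->]].
  - by apply/orP; left; apply: Hinv.
  - apply/orP; right.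
    have -> : x + (u + v) + v = x + u by rewrite -!addrA addxx addr0.
    exact: Hinv.
  - apply/orP; right.
    have -> : x + u + v = x + v + u by rewrite -!addrA (addrC u).
    exact: Hinv.
  - apply/orP; left.
    have -> : x + (u + v) = x + v + u by rewrite -!addrA (addrC u).
    exact: Hinv.
have H3 : forall W : 'M['F_2]_m, (L' <= W)%MS -> \rank W = (l.+1 + a + 1)%N ->
      exists2 x, x \in X' & (x <= W)%MS.
  move=> W LW rW.
  have rW' : \rank W = (l + a.+1 + 1)%N by rewrite rW; lia.
  have [x xX xW] := Hb W (submx_trans LL' LW) rW'.
  by exists x; rewrite // inE xX.
move=> /(_ H1 H2 H3) le.
have cX' : (#|X'| <= 2 * #|X|)%N.
  have -> : X' = X :|: [set x + v | x in X].
    apply/setP => x; rewrite !inE; congr (_ || _); apply/idP/imsetP.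
      by move=> xv; exists (x + v); rewrite // -addrA addxx addr0.
    by move=> [y yX ->]; rewrite -addrA addxx addr0.
  apply: leq_trans (leq_card_setU _ _) _ ; rewrite mul2n -addnn leq_add2l.
  apply: leq_imset_card.
have e : (m - l.+1 - a = m - l - a.+1)%N by lia.
rewrite e expnS -mulnA in le.
rewrite -(leq_pmul2l (isT : (0 < 2)%N)).
exact: leq_trans le cX'.
Qed.

Lemma sum_F2 (F : 'F_2 -> nat) : (\sum_(e : 'F_2) F e = F 0%R + F 1%R)%N.
Proof.
rewrite (bigD1 0) //= (bigD1 1) //= big1 ?addn0 // => e /andP [e1 e0].
by case: (F2_cases e) e1 e0 => ->; rewrite eqxx // andbF.
Qed.

Definition cnt m (B : {set 'rV['F_2]_m}) (f : 'rV['F_2]_m) (e : 'F_2) :=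
  #|[set y in B | dot y f == e]|.

Lemma cnt01 m (B : {set 'rV['F_2]_m}) f : (cnt B f 0%R + cnt B f 1%R = #|B|)%N.
Proof.
rewrite /cnt -(cardsID [set y | dot y f == 1%R] B) addnC; congr (_ + _)%N;
  apply: eq_card => y; rewrite !inE;
  case: (F2_cases (dot y f)) => ->; by rewrite ?andbT ?andbF.
Qed.

Lemma card_nz m : #|[set f : 'rV['F_2]_m | f != 0]| = (2 ^ m - 1)%N.
Proof.
have -> : [set f : 'rV['F_2]_m | f != 0] = [set~ 0] by apply/setP => f; rewrite !inE.
by rewrite cardsC1 card_rV2 subn1.
Qed.

Lemma unbalanced_many m a j (B : {set 'rV['F_2]_m}) :
  (a < m)%N -> odd j -> #|B| = (j * 2 ^ a)%N ->
  (2 ^ (m - a) - 1 <= #|[set f : 'rV['F_2]_m | (f != 0%R) && (2 * cnt B f 1%R != #|B|)%N]|)%N.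
Proof.
move=> am oj cB.
set X := [set f : 'rV['F_2]_m | _].
have := @block m a 0 0 X (mxrank0 _ _ _) (ltac:(lia)).
rewrite expn0 mul1n subn0; apply.
- move=> x; rewrite inE submx0 => /andP [] //.
- move=> x u xX; rewrite submx0 => /eqP ->; by rewrite addr0.
move=> W _ rW.
case: (boolP [exists x, (x \in X) && (x <= W)%MS]) => [/existsP [x /andP [xX xW]]|nex].
  by exists x.
exfalso.
have [N eN] : exists N, ((2 ^ \rank W).-1 * #|B| = 2 ^ \rank W * N)%N.
  apply: poisson => f fW f0.
  apply/eqP; apply: contraR nex => h; apply/existsP; exists f.
  by rewrite fW andbT inE f0.
rewrite rW add0n cB addn1 expnS in eN.
have : ((2 * 2 ^ a).-1 * j = 2 * N)%N.
  apply/eqP; rewrite -(eqn_pmul2l (expn_gt0 2 a)); apply/eqP.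
  move: eN; set q := (2 ^ a)%N; nia.
move=> /(congr1 odd); rewrite !oddM oj andbT /=.
rewrite -subn1 oddB ?oddM //.
by rewrite muln_gt0 expn_gt0.
Qed.

Lemma perpsi m a j S (B : {set 'rV['F_2]_m}) :
  (0 < a)%N -> (a < m)%N -> odd j -> (2 * S = j * 2 ^ a)%N ->
  (#|[set h : 'rV['F_2]_m * 'F_2 | (h.1 != 0%R) & (cnt B h.1 h.2 == S)]|
     <= (2 ^ m - 1) + (#|B| == 2 * S) * ((2 ^ m - 1) - 2 * (2 ^ (m - a) - 1)))%N.
Proof.
move=> a0 am oj eS.
rewrite card_sub_sum2.
rewrite (eq_bigl (fun p : 'rV['F_2]_m * 'F_2 => (p.1 != 0%R) && predT p.2)); last first.
  by move=> p; rewrite andbT.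
rewrite -(pair_big (fun f : 'rV['F_2]_m => f != 0%R) predT
   (fun f e => (cnt B f e == S : nat))) /=.
under eq_bigr do rewrite sum_F2.
have c01 := cnt01 B.
set nz := [set f : 'rV['F_2]_m | f != 0%R].
have snz : (\sum_(f : 'rV['F_2]_m | f != 0%R) 1 = 2 ^ m - 1)%N.
  by rewrite sum1dep_card card_nz.
case: (eqVneq #|B| (2 * S)%N) => hB; last first.
  rewrite mul0n addn0 -snz; apply: leq_sum => f _.
  have := c01 f; move/eqP: hB; case: eqP; case: eqP => /=; lia.
rewrite mul1n.
set X := [set f : 'rV['F_2]_m | (f != 0%R) && (2 * cnt B f 1%R != #|B|)%N].
have hX : (2 ^ (m - a) - 1 <= #|X|)%N.
  apply: unbalanced_many oj _ => //; by rewrite hB.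
have le1 : (\sum_(f | f != 0%R) ((cnt B f 0%R == S) + (cnt B f 1%R == S))
   <= \sum_(f | f != 0%R) 2 * (f \notin X))%N.
  apply: leq_sum => f f0; rewrite inE f0 /=.
  have := c01 f; move: hB; case: eqP; case: eqP => /=; lia.
apply: leq_trans le1 _.
rewrite -big_distrr /= -card_sub_sum2.
have -> : #|[set f : 'rV['F_2]_m | f != 0%R & f \notin X]| = (#|nz| - #|X|)%N.
  have -> : [set f : 'rV['F_2]_m | f != 0%R & f \notin X] = nz :\: X.
    by apply/setP => f; rewrite !inE andbC.
  rewrite cardsD (_ : nz :&: X = X) //.
  by apply/setP => f; rewrite !inE andbA andbb.
rewrite card_nz.
have hp : (2 * 2 ^ (m - a) <= 2 ^ m)%N.
  by rewrite -expnS leq_exp2l //; lia.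
move: hX hp; set P := (2 ^ m)%N; set Q := (2 ^ (m - a))%N.
have : (0 < Q)%N by apply: expn_gt0.
lia.
Qed.

Lemma uniform (T Y : finType) (XS : {set T}) (p : T -> Y) (F : {set Y}) :
  (forall x, x \in XS -> p x \in F) ->
  (forall P P', P \in F -> P' \in F -> exists σ : T -> T, injective σ /\
      (forall x, x \in XS -> p x = P -> σ x \in XS /\ p (σ x) = P')) ->
  forall q : pred Y,
  (#|[set x in XS | q (p x)]| * #|F| = #|[set P in F | q P]| * #|XS|)%N.
Proof.
move=> pF Htr q.
pose K P := #|[set x in XS | p x == P]|.
have KK : forall P P', P \in F -> P' \in F -> (K P <= K P')%N.
  move=> P P' PF P'F; have [σ [σinj Hσ]] := Htr P P' PF P'F.
  rewrite /K -(card_imset _ σinj); apply: subset_leq_card; apply/subsetP => z.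
  case/imsetP => x; rewrite inE => /andP [xX /eqP px] ->.
  by have [σX σp] := Hσ x xX px; rewrite inE σX σp eqxx.
have sumE : forall q' : pred Y,
    #|[set x in XS | q' (p x)]| = (\sum_(P in F) q' P * K P)%N.
  move=> q'; rewrite card_sub_sum (partition_big p (fun P => P \in F)) //=.
  apply: eq_bigr => P PF.
  rewrite (eq_bigr (fun _ => q' P * 1)%N); last by move=> x /andP [_ /eqP ->]; rewrite muln1.
  by rewrite -big_distrr /= sum1dep_card.
case: (set_0Vmem F) => [F0|[P0 P0F]].
  rewrite F0 cards0 muln0; apply/esym/eqP; rewrite muln_eq0; apply/orP; left.
  by rewrite cards_eq0; apply/eqP/setP => P; rewrite !inE.
have KE : forall P, P \in F -> K P = K P0.
  by move=> P PF; apply/eqP; rewrite eqn_leq !KK.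
have XSE : #|XS| = (\sum_(P in F) K P)%N.
  transitivity #|[set x in XS | predT (p x)]|.
    by apply: eq_card => x; rewrite !inE andbT.
  by rewrite sumE; apply: eq_bigr => P _; rewrite mul1n.
have XSE' : #|XS| = (#|F| * K P0)%N.
  rewrite XSE (eq_bigr (fun P => K P0)); last by move=> P PF; apply: KE.
  by rewrite sum_nat_const.
rewrite XSE' sumE (eq_bigr (fun P => q P * K P0)%N); last by move=> P PF; rewrite KE.
rewrite -big_distrl /= -card_sub_sum.
by rewrite -mulnA (mulnC (K P0)).
Qed.

Lemma flat_eqmx n (x0 : vec n) (U U' : 'M['F_2]_n) :
  (U :=: U')%MS -> flat_of x0 U = flat_of x0 U'.
Proof. by move=> e; apply/setP => x; rewrite !inE e. Qed.

Definition actS n (v : vec n) (G : 'M['F_2]_n) (Q : {set vec n}) : {set vec n} :=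
  [set x *m G + v | x in Q].

Lemma act_flat n (x0 v : vec n) (U G : 'M['F_2]_n) : G \in unitmx ->
  actS v G (flat_of x0 U) = flat_of (x0 *m G + v) (U *m G).
Proof.
move=> Gu; have Gf : row_free G by rewrite row_free_unit.
apply/setP => y; rewrite inE; apply/imsetP/idP.
  move=> [x]; rewrite inE => xU ->.
  have -> : x *m G + v - (x0 *m G + v) = (x - x0) *m G.
    by rewrite mulmxBl opprD addrACA subrr addr0.
  exact: submxMr.
move=> yU; exists ((y - v) *m invmx G); last by rewrite mulmxKV // subrK.
rewrite inE -(submxMfree _ _ Gf) mulmxBl mulmxKV //.
by rewrite -addrA -opprD (addrC v).
Qed.

Lemma flats_act n D (Q : {set vec n}) (v : vec n) (G : 'M['F_2]_n) :
  G \in unitmx -> Q \in flats n D -> actS v G Q \in flats n D.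
Proof.
move=> Gu; rewrite /flats !inE => /existsP [x0 /existsP [U /andP [rU /eqP ->]]].
apply/existsP; exists (x0 *m G + v); apply/existsP; exists (U *m G).
by rewrite mxrankMfree ?row_free_unit // rU act_flat // eqxx.
Qed.

Lemma flats_trans n D (P P' : {set vec n}) : P \in flats n D -> P' \in flats n D ->
  exists v G, G \in unitmx /\ actS v G P = P'.
Proof.
rewrite /flats !inE => /existsP [x0 /existsP [U /andP [/eqP rU /eqP ->]]].
move=> /existsP [x1 /existsP [U' /andP [/eqP rU' /eqP ->]]].
have [G Gu eG] := eq_rank_unitmx (etrans rU (esym rU')).
exists (x1 - x0 *m G), G; split => //.
by rewrite act_flat // addrC subrK (flat_eqmx _ eG).
Qed.

Definition img n m (ψ : vec n * 'M['F_2]_(m, n)) : {set vec n} :=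
  [set ψ.1 + y *m ψ.2 | y in [set: 'rV['F_2]_m]].

Definition subfl n m (x : (vec n * 'M['F_2]_(m, n)) * ('rV['F_2]_m * 'F_2)) :
  {set vec n} :=
  [set x.1.1 + y *m x.1.2 | y in [set y : 'rV['F_2]_m | dot y x.2.1 == x.2.2]].

Definition sig n m (v : vec n) (G : 'M['F_2]_n) (ψ : vec n * 'M['F_2]_(m, n)) :=
  (ψ.1 *m G + v, ψ.2 *m G).

Lemma act_param n m (x0 v : vec n) (M : 'M['F_2]_(m, n)) (G : 'M['F_2]_n)
  (H : {set 'rV['F_2]_m}) :
  actS v G [set x0 + y *m M | y in H] = [set (x0 *m G + v) + y *m (M *m G) | y in H].
Proof.
rewrite /actS -imset_comp; apply: eq_imset => y /=.
by rewrite mulmxDl mulmxA addrAC.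
Qed.

Lemma sig_inj n m (v : vec n) (G : 'M['F_2]_n) : G \in unitmx ->
  injective (@sig n m v G).
Proof.
move=> Gu [x1 M1] [x2 M2] [/addIr e1 e2].
have Gf : row_free G by rewrite row_free_unit.
by rewrite (row_free_inj Gf e1) (row_free_inj Gf e2).
Qed.

Lemma dotDl m (y z f : 'rV['F_2]_m) : dot (y + z) f = dot y f + dot z f.
Proof. by rewrite /dot mulmxDl mxE. Qed.

Lemma dotNl m (y f : 'rV['F_2]_m) : dot (- y) f = - dot y f.
Proof. by rewrite /dot mulNmx mxE. Qed.

Lemma mx11_eq0 (A : 'M['F_2]_1) : (A == 0) = (A 0 0 == 0).
Proof.
apply/eqP/eqP => [->|h]; first by rewrite mxE.
by apply/matrixP => i j; rewrite (ord1 i) (ord1 j) h mxE.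
Qed.

Lemma sub_ker_dot m (y f : 'rV['F_2]_m) : (y <= kermx f^T)%MS = (dot y f == 0).
Proof. by rewrite sub_kermx mx11_eq0. Qed.

Lemma dot_exists m (f : 'rV['F_2]_m) (e : 'F_2) : f != 0 -> exists y, dot y f = e.
Proof.
move=> f0.
case: (pickP (fun i => f 0 i == 1)) => [i /eqP fi | none].
  exists (e *: delta_mx 0 i).
  by rewrite /dot -scalemxAl -rowE !mxE fi mulr1.
exfalso; move/eqP: f0; apply; apply/rowP => i; rewrite mxE.
by case: (F2_cases (f 0 i)) (none i) => -> //; rewrite eqxx.
Qed.

Lemma rank_tr_nz m (f : 'rV['F_2]_m) : f != 0 -> \rank f^T = 1%N.
Proof.
move=> f0; rewrite mxrank_tr; apply/eqP.
by rewrite eqn_leq rank_leq_row lt0n mxrank_eq0 f0.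
Qed.

Lemma img_flats n m (ψ : vec n * 'M['F_2]_(m, n)) :
  row_free ψ.2 -> img ψ \in flats n m.
Proof.
case: ψ => x0 M /= Mf.
rewrite /flats inE; apply/existsP; exists x0; apply/existsP; exists <<M>>%MS.
rewrite genmxE; move/eqP: Mf => ->; rewrite eqxx /=.
apply/eqP/setP => x; rewrite inE genmxE; apply/imsetP/idP.
  by move=> [y _ ->]; rewrite addrC addKr submxMl.
by case/submxP => y ey; exists y; rewrite ?inE // -ey addrC subrK.
Qed.

Lemma subfl_flats n D (x : (vec n * 'M['F_2]_(D.+1, n)) * ('rV['F_2]_D.+1 * 'F_2)) :
  row_free x.1.2 -> x.2.1 != 0 -> subfl x \in flats n D.
Proof.
case: x => [[x0 M] [f e]] /= Mf f0.
have [y0 dy0] := dot_exists e f0.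
rewrite /flats inE; apply/existsP; exists (x0 + y0 *m M); apply/existsP.
exists <<kermx f^T *m M>>%MS.
rewrite genmxE mxrankMfree // mxrank_ker rank_tr_nz // subn1 eqxx /=.
apply/eqP/setP => x; rewrite inE genmxE; apply/imsetP/idP.
  move=> [y]; rewrite inE /= => /eqP dy ->.
  have -> : x0 + y *m M - (x0 + y0 *m M) = (y - y0) *m M.
    by rewrite mulmxBl opprD addrACA subrr add0r.
  apply: submxMr; rewrite sub_ker_dot dotDl.
  by rewrite dotNl dy dy0 subrr.
case/submxP => z ez.
exists (y0 + z *m kermx f^T).
  by rewrite inE dotDl dy0 /dot -mulmxA mulmx_ker mulmx0 mxE addr0.
by rewrite mulmxDl -mulmxA -ez addrA addrC subrK.
Qed.

Definition Psi n m := [set ψ : vec n * 'M['F_2]_(m, n) | row_free ψ.2].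
Definition HS m := setX [set f : 'rV['F_2]_m | f != 0] [set: 'F_2].

Lemma Psi_gt0 n m : (m <= n)%N -> (0 < #|Psi n m|)%N.
Proof.
move=> mn; apply/card_gt0P; exists (0, pid_mx m); rewrite inE /row_free /=.
by rewrite rank_pid_mx.
Qed.

Lemma card_HS m : #|HS m| = ((2 ^ m - 1) * 2)%N.
Proof. by rewrite cardsX card_nz cardsT card_F2. Qed.

Lemma avg_eq (a b c d : nat) : (a * b = c * d)%N -> (0 < b)%N -> (0 < d)%N ->
  (c%:R / b%:R = a%:R / d%:R :> rat).
Proof.
move=> e b0 d0; apply/eqP; rewrite eqr_div ?pnatr_eq0 -?lt0n //.
by rewrite -!natrM -e.
Qed.

Lemma sig_free n m (v : vec n) (G : 'M['F_2]_n) (ψ : vec n * 'M['F_2]_(m, n)) :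
  G \in unitmx -> (ψ \in Psi n m) -> sig v G ψ \in Psi n m.
Proof.
move=> Gu; rewrite !inE /row_free /= mxrankMfree //; by rewrite row_free_unit.
Qed.

Lemma lamM n m S A : (m <= n)%N ->
  lam n m S A = (#|[set ψ in Psi n m | #|img ψ :&: A| == S]|%:R / #|Psi n m|%:R).
Proof.
move=> mn; rewrite /lam.
have Hu := @uniform _ _ (Psi n m) (@img n m) (flats n m).
have pF : forall x, x \in Psi n m -> img x \in flats n m.
  by move=> x; rewrite inE => xf; apply: img_flats.
have e := Hu pF _ (fun Q => #|Q :&: A| == S).
have Ps0 := Psi_gt0 mn.
apply: avg_eq; [apply: e|idtac|exact: Ps0].
  move=> P P' PF P'F; have [v [G [Gu eP]]] := flats_trans PF P'F.
  exists (sig v G); split; first exact: sig_inj.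
  move=> ψ ψP pe; split; first exact: sig_free.
  by case: ψ ψP pe => x0 M _ pe; rewrite /img /sig /= -act_param -eP -pe.
have [ψ ψP] : exists ψ, ψ \in Psi n m by apply/card_gt0P.
by apply/card_gt0P; exists (img ψ); apply: pF.
Qed.

Lemma lamD n D S A : (D.+1 <= n)%N ->
  lam n D S A = (#|[set x in setX (Psi n D.+1) (HS D.+1) | #|subfl x :&: A| == S]|%:R
                 / #|setX (Psi n D.+1) (HS D.+1)|%:R).
Proof.
move=> mn; rewrite /lam.
have Hu := @uniform _ _ (setX (Psi n D.+1) (HS D.+1)) (@subfl n D.+1) (flats n D).
have pF : forall x, x \in setX (Psi n D.+1) (HS D.+1) -> subfl x \in flats n D.
  move=> x xX; have /andP [xf x0] : row_free x.1.2 && (x.2.1 != 0) by move: xX; rewrite !inE ?andbT.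
  exact: (subfl_flats xf x0).
have e := Hu pF _ (fun Q => #|Q :&: A| == S).
have X0 : (0 < #|setX (Psi n D.+1) (HS D.+1)|)%N.
  rewrite cardsX card_HS muln_gt0 Psi_gt0 //= muln_gt0 andbT subn_gt0.
  by rewrite -{1}(expn0 2) ltn_exp2l.
apply: avg_eq; [apply: e|idtac|exact: X0].
  move=> P P' PF P'F; have [v [G [Gu eP]]] := flats_trans PF P'F.
  exists (fun x => (sig v G x.1, x.2)); split.
    move=> [a b] [c d] e; have /= e1 := congr1 fst e; have /= e2 := congr1 snd e.
    by rewrite (sig_inj Gu e1) e2.
  move=> [ψ h]; rewrite inE => /andP [ψP hH] pe; split.
    by rewrite inE /= hH andbT sig_free.
  by case: ψ ψP hH pe => x0 M _ _ pe; rewrite /subfl /sig /= -act_param -eP -pe.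
have [x xP] : exists x, x \in setX (Psi n D.+1) (HS D.+1) by apply/card_gt0P.
by apply/card_gt0P; exists (subfl x); apply: pF.
Qed.

Lemma final_arith (NX NP P M E : nat) : (0 < P)%N -> (0 < M)%N -> (1 <= E)%N ->
  (2 * (E - 1) <= M)%N ->
  (NX <= P * M + NP * (M - 2 * (E - 1)))%N ->
  NX%:R / (P * (M * 2))%:R <= 1 / 2 + (1 / 2 - (E%:R - 1) / M%:R) * (NP%:R / P%:R) :> rat.
Proof.
move=> P0 M0 E1 EM le.
have P0' : P%:R != 0 :> rat by rewrite pnatr_eq0 -lt0n.
have M0' : M%:R != 0 :> rat by rewrite pnatr_eq0 -lt0n.
have eR : 1 / 2 + (1 / 2 - (E%:R - 1) / M%:R) * (NP%:R / P%:R) =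
   (P * M + NP * (M - 2 * (E - 1)))%:R / (P * (M * 2))%:R :> rat.
  rewrite natrD !natrM natrB // natrM natrB //.
  by field; rewrite P0' M0' /=.
rewrite eR ler_pM2r ?invr_gt0 ?ltr0n ?muln_gt0 ?P0 ?M0 //.
by rewrite ler_nat.
Qed.

Lemma card_imset_cap (aT rT : finType) (g : aT -> rT) (H : {set aT}) (A : {set rT}) :
  injective g -> #|[set g y | y in H] :&: A| = #|[set y in H | g y \in A]|.
Proof.
move=> ginj; rewrite -(card_imset _ ginj); apply: eq_card => z; rewrite !inE.
apply/andP/imsetP.
  move=> [/imsetP [y yH ->] gA]; exists y => //; by rewrite inE yH.
by move=> [y]; rewrite inE => /andP [yH gA] ->; rewrite gA imset_f.
Qed.

Lemma pinj n m (ψ : vec n * 'M['F_2]_(m, n)) : row_free ψ.2 ->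
  injective (fun y : 'rV['F_2]_m => ψ.1 + y *m ψ.2).
Proof. by move=> f y z /addrI /(row_free_inj f). Qed.

Lemma card_subfl n m (ψ : vec n * 'M['F_2]_(m, n)) h (A : {set vec n}) :
  row_free ψ.2 ->
  #|subfl (ψ, h) :&: A| = cnt [set y | ψ.1 + y *m ψ.2 \in A] h.1 h.2.
Proof.
move=> f; rewrite /subfl /= card_imset_cap; last exact: pinj.
by apply: eq_card => y; rewrite !inE andbC.
Qed.

Lemma card_img n m (ψ : vec n * 'M['F_2]_(m, n)) (A : {set vec n}) :
  row_free ψ.2 ->
  #|img ψ :&: A| = #|[set y | ψ.1 + y *m ψ.2 \in A]|.
Proof.
move=> f; rewrite /img card_imset_cap; last exact: pinj.
by apply: eq_card => y; rewrite !inE.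
Qed.

Unset Implicit Arguments.
Theorem mainTheorem10 (d s j k t n : nat) (A : {set 'rV['F_2]_n}) :
  (1 <= d)%N -> (1 < s)%N -> (s < 2 ^ d)%N ->
  s = (j * 2 ^ k)%N -> odd j ->
  (d + t + 1 <= n)%N ->
  lam n (d + t) (2 ^ t * s)%N A <=
    1 / 2 + (1 / 2 - ((2 ^ (d - k))%:R - 1) / ((2 ^ (d + t + 1))%:R - 1))
            * lam n (d + t + 1) (2 ^ t.+1 * s)%N A.
Proof.
move=> d1 s1 sd es oj hn.
rewrite addn1 in hn *.
set D := (d + t)%N.
set m := D.+1.
set S := (2 ^ t * s)%N.
have kd : (k < d)%N.
  have j1 : (1 <= j)%N by case: j oj es.
  rewrite -(ltn_exp2l _ _ (isT : (1 < 2)%N)); apply: leq_ltn_trans sd.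
  by rewrite es leq_pmull.
set a := (k + t + 1)%N.
have a0 : (0 < a)%N by rewrite /a addn1.
have am : (a < m)%N by rewrite /a /m /D; lia.
have eS : (2 * S = j * 2 ^ a)%N.
  by rewrite /S /a es !expnD expn1; ring.
have ema : (m - a = d - k)%N by rewrite /m /a /D; lia.
have e2S : (2 ^ t.+1 * s = 2 * S)%N by rewrite /S expnS mulnA.
rewrite (lamD _ _ hn) (lamM _ _ hn) cardsX card_HS mulnA.
set NP := #|[set ψ in Psi n m | _]|.
set NX := #|[set x in setX (Psi n m) (HS m) | _]|.
set P := #|Psi n m|.
set C := ((2 ^ m - 1) - 2 * (2 ^ (m - a) - 1))%N.
have key : (NX <= P * (2 ^ m - 1) + NP * C)%N.
  rewrite /NX card_sub_sum.
  rewrite (eq_bigl (fun x => (x.1 \in Psi n m) && (x.2 \in HS m))); last first.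
    by move=> [x1 x2]; rewrite in_setX.
  rewrite -(pair_big (fun ψ => ψ \in Psi n m) (fun h => h \in HS m)
     (fun ψ h => (#|subfl (ψ, h) :&: A| == S : nat))) /=.
  have -> : (P * (2 ^ m - 1) + NP * C =
     \sum_(ψ in Psi n m) ((2 ^ m - 1) + (#|img ψ :&: A| == 2 * S) * C))%N.
    rewrite big_split /= sum_nat_const -big_distrl /= -card_sub_sum.
    by rewrite /NP e2S mulnC.
  apply: leq_sum => ψ ψP.
  have ψf : row_free ψ.2 by move: ψP; rewrite inE.
  rewrite -card_sub_sum card_img //.
  set B := [set y | ψ.1 + y *m ψ.2 \in A].
  have := perpsi B a0 am oj eS.
  apply: leq_trans; apply: subset_leq_card; apply/subsetP => h.
  by rewrite !inE card_subfl // ?andbT.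
rewrite /C ema in key.
have M0 : (0 < 2 ^ m - 1)%N by rewrite subn_gt0 -{1}(expn0 2) ltn_exp2l.
have hE : (2 * (2 ^ (m - a) - 1) <= 2 ^ m - 1)%N.
  have : (2 * 2 ^ (m - a) <= 2 ^ m)%N by rewrite -expnS leq_exp2l //; lia.
  have : (0 < 2 ^ (m - a))%N by apply: expn_gt0.
  lia.
rewrite ema in hE.
have -> : (2 ^ m)%:R - 1 = (2 ^ m - 1)%:R :> rat by rewrite natrB ?expn_gt0.
rewrite -mulnA; apply: (final_arith (E := 2 ^ (d - k))) => //; first exact: Psi_gt0.
exact: expn_gt0.
Qed.
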